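(* Fix $f\in S_1\oplus S_2$ with $f\ne0$. Then $\dim\big(\pi_{1,2}P_\xi(S_3)+[f]\big)=4$ for almost every $\xi\in\mathbb{R}^2$.
   Context: For $j\ge0$, $S_j$ is the real vector space of homogeneous polynomials of degree $j$ in $r,s$; $[\cdot]$ denotes linear span. For $\xi=(a,b)\in\mathbb{R}^2$ and a polynomial $f$, $P_\xi f(r,s)=f(\xi)+\partial_rf(\xi)(r-a)+\partial_sf(\xi)(s-b)+\frac12\partial_{rr}f(\xi)(r-a)^2+\partial_{rs}f(\xi)(r-a)(s-b)+\frac12\partial_{ss}f(\xi)(s-b)^2$ (second-order Taylor polynomial at $\xi$), an element of $S_0\oplus S_1\oplus S_2$. $\pi_{1,2}$ is the projection of $S_0\oplus S_1\oplus S_2$ onto $S_1\oplus S_2$ along $S_0$. *)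

(* Defs.v *)
From HB Require Import structures.
From mathcomp Require Import all_boot all_order all_algebra.
From mathcomp Require Import all_classical all_reals all_analysis.
Set Implicit Arguments. Unset Strict Implicit. Unset Printing Implicit Defensive.
Import Order.TTheory GRing.Theory Num.Theory.
Local Open Scope ring_scope.

(* Real polynomials in two variables r, s are represented as
   p : {poly {poly R}}, i.e. polynomials in the (outer) variable s whose
   coefficients are polynomials in the (inner) variable r. *)

Section Bivariate.
Variable R : realType.
Definition bipoly := {poly {poly R}}.

Definition coef2 (p : bipoly) (i k : nat) : R := (p`_k)`_i.

Definition mono2 (i k : nat) : bipoly := ('X^i)%:P * 'X^k.

Definition cst2 (c : R) : bipoly := c%:P%:P.
Definition rvar : bipoly := 'X%:P.
Definition svar : bipoly := 'X.

Definition eval2 (p : bipoly) (xi : R * R) : R := (p.[xi.2%:P]).[xi.1].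

Definition dr (p : bipoly) : bipoly := map_poly (fun q : {poly R} => q^`()) p.
Definition ds (p : bipoly) : bipoly := p^`().

Definition homog (j : nat) (p : bipoly) : Prop :=
  forall i k, (i + k != j)%N -> coef2 p i k = 0.

Definition in_S12 (p : bipoly) : Prop :=
  exists p1 p2, [/\ homog 1 p1, homog 2 p2 & p = p1 + p2].

Definition taylor2 (xi : R * R) (f : bipoly) : bipoly :=
  let ra := rvar - cst2 xi.1 in
  let sb := svar - cst2 xi.2 in
  cst2 (eval2 f xi)
  + cst2 (eval2 (dr f) xi) * ra + cst2 (eval2 (ds f) xi) * sb
  + cst2 (eval2 (dr (dr f)) xi / 2) * ra ^+ 2
  + cst2 (eval2 (ds (dr f)) xi) * ra * sb
  + cst2 (eval2 (ds (ds f)) xi / 2) * sb ^+ 2.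

Definition pi12 (p : bipoly) : bipoly := p - cst2 (coef2 p 0 0).

Definition coord12 (p : bipoly) : 'rV[R]_5 :=
  \row_(j < 5) [:: coef2 p 1 0; coef2 p 0 1; coef2 p 2 0; coef2 p 1 1;
                  coef2 p 0 2]`_j.

(* pi_{1,2} P_xi (S_3) + [f], as a subspace of R^5 (via coord12):
   the span of the images of the monomial basis r^3, r^2 s, r s^2, s^3 of S_3
   together with f. *)
Definition imgS3_plus (xi : R * R) (f : bipoly) : {vspace 'rV[R]_5} :=
  <<[:: coord12 (pi12 (taylor2 xi (mono2 3 0)));
        coord12 (pi12 (taylor2 xi (mono2 2 1)));
        coord12 (pi12 (taylor2 xi (mono2 1 2)));
        coord12 (pi12 (taylor2 xi (mono2 0 3)));
        coord12 f]>>%VS.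
End Bivariate.

(* Main.v *)
Require Import Defs.
From HB Require Import structures.
From mathcomp Require Import all_boot all_order all_algebra.
From mathcomp Require Import all_classical all_reals all_analysis.
From mathcomp Require Import ring lra zify.
Import Order.TTheory GRing.Theory Num.Theory.
Local Open Scope ring_scope.
Section Alg.
Variable R : realType.
Implicit Types (p q : bipoly R) (c a b : R).

Lemma cst2D a b : cst2 (a + b) = cst2 a + cst2 b :> bipoly R.
Proof. by rewrite /cst2 !polyCD. Qed.
Lemma cst2M a b : cst2 (a * b) = cst2 a * cst2 b :> bipoly R.
Proof. by rewrite /cst2 !polyCM. Qed.
Lemma cst2N a : cst2 (- a) = - cst2 a :> bipoly R.
Proof. by rewrite /cst2 !polyCN. Qed.
Lemma cst2n n : cst2 (n%:R) = n%:R :> bipoly R.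
Proof. by rewrite /cst2 !polyC_natr. Qed.

Lemma mono2E i k : mono2 R i k = rvar R ^+ i * svar R ^+ k.
Proof. by rewrite /mono2 /rvar /svar rmorphXn. Qed.

Lemma coef2D p q i k : coef2 (p + q) i k = coef2 p i k + coef2 q i k.
Proof. by rewrite /coef2 !coefD. Qed.

Lemma coef2_cst c i k : coef2 (cst2 c) i k = if (i == 0%N) && (k == 0%N) then c else 0.
Proof.
rewrite /coef2 /cst2 coefC.
case: eqP => hk; rewrite ?coefC ?andbT ?andbF ?coef0; by case: i.
Qed.

Lemma coef2_mono c i k i' k' :
  coef2 (cst2 c * mono2 R i k) i' k' = if (i' == i) && (k' == k) then c else 0.
Proof.
rewrite /coef2 /cst2 /mono2 mulrA -polyCM coefMXn.
case: ltnP => hk.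
  by rewrite coef0 (ltn_eqF hk) andbF.
rewrite coefC; case: eqP => hk'.
  have -> : k' = k by move: hk hk'; lia.
  rewrite eqxx andbT coefMXn; case: ltnP => hi.
    by rewrite (ltn_eqF hi).
  rewrite coefC; case: eqP => hi'.
    have -> : i' = i by lia.
    by rewrite eqxx.
  by case: eqP => // h; exfalso; lia.
rewrite coef0; have -> : (k' == k) = false by apply/negbTE/eqP; lia.
by rewrite andbF.
Qed.

Lemma taylor_nf a b c0 c1 c2 c3 c4 c5 :
  let ra := rvar R - cst2 a in let sb := svar R - cst2 b in
  cst2 c0 + cst2 c1 * ra + cst2 c2 * sb + cst2 c3 * ra ^+ 2 + cst2 c4 * ra * sb
  + cst2 c5 * sb ^+ 2 =
  cst2 (c0 - c1 * a - c2 * b + c3 * a ^+ 2 + c4 * a * b + c5 * b ^+ 2)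
  + cst2 (c1 - 2 * a * c3 - b * c4) * mono2 R 1 0
  + cst2 (c2 - a * c4 - 2 * b * c5) * mono2 R 0 1
  + cst2 c3 * mono2 R 2 0 + cst2 c4 * mono2 R 1 1 + cst2 c5 * mono2 R 0 2.
Proof.
move=> ra sb; rewrite /ra /sb !mono2E.
rewrite !(cst2D, cst2M, cst2N, cst2n).
rewrite /cst2; ring.
Qed.


Lemma dr_mono c i k : dr (cst2 c * mono2 R i k) = cst2 (c * i%:R) * mono2 R i.-1 k.
Proof.
rewrite /dr /cst2 /mono2 !mulrA -!polyCM.
apply/polyP => j; rewrite coef_map_id0 ?deriv0 // !coefMXn.
case: ltnP => _; first by rewrite deriv0.
rewrite !coefC; case: eqP => _; last by rewrite deriv0.
rewrite mul_polyC derivZ derivXn -mul_polyC polyCM polyC_natr -mulrA mulr_natl.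
by [].
Qed.

Lemma ds_mono c i k : ds (cst2 c * mono2 R i k) = cst2 (c * k%:R) * mono2 R i k.-1.
Proof.
rewrite /ds /cst2 /mono2 !mulrA -!polyCM.
rewrite mul_polyC derivZ derivXn -mul_polyC !polyCM !polyC_natr.
rewrite -mulr_natl; ring.
Qed.

Lemma eval_mono c i k a b : eval2 (cst2 c * mono2 R i k) (a, b) = c * a ^+ i * b ^+ k.
Proof.
rewrite /eval2 /cst2 /mono2 /= !hornerE.
by [].
Qed.

Lemma coef2B p q i k : coef2 (p - q) i k = coef2 p i k - coef2 q i k.
Proof. by rewrite /coef2 !coefB. Qed.

Lemma coord_taylor (xi : R * R) p :
  let a := xi.1 in let b := xi.2 in
  let e1 := eval2 (dr p) xi in let e2 := eval2 (ds p) xi in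
  let e3 := eval2 (dr (dr p)) xi / 2 in let e4 := eval2 (ds (dr p)) xi in
  let e5 := eval2 (ds (ds p)) xi / 2 in
  coord12 (pi12 (taylor2 xi p)) =
  \row_(j < 5) [:: e1 - 2 * a * e3 - b * e4; e2 - a * e4 - 2 * b * e5; e3; e4; e5]`_j.
Proof.
move=> a b e1 e2 e3 e4 e5; rewrite /e1 /e2 /e3 /e4 /e5 /a /b.
rewrite /pi12 /taylor2 taylor_nf.
apply/rowP => j; rewrite !mxE.
by case: j => [[|[|[|[|[|//]]]]] hj] /=;
  rewrite coef2B !coef2D !coef2_cst !coef2_mono /=; ring.
Qed.
End Alg.

Section LA.
Variable R : realFieldType.
Definition rw (x1 x2 x3 x4 x5 : R) : 'rV[R]_5 := \row_(j < 5) [:: x1; x2; x3; x4; x5]`_j.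


Lemma rw_eq0 (x1 x2 x3 x4 x5 : R) : rw x1 x2 x3 x4 x5 = 0 ->
  [/\ x1 = 0, x2 = 0, x3 = 0, x4 = 0 & x5 = 0].
Proof.
move/rowP => h.
have := h (@Ordinal 5 0 isT); have := h (@Ordinal 5 1 isT);
have := h (@Ordinal 5 2 isT); have := h (@Ordinal 5 3 isT);
have := h (@Ordinal 5 4 isT).
by rewrite !mxE /=.
Qed.

Lemma rwD x1 x2 x3 x4 x5 y1 y2 y3 y4 y5 :
  rw x1 x2 x3 x4 x5 + rw y1 y2 y3 y4 y5 = rw (x1+y1) (x2+y2) (x3+y3) (x4+y4) (x5+y5).
Proof. by apply/rowP => j; rewrite !mxE; case: j => [[|[|[|[|[|]]]]]]. Qed.

Lemma rwZ k x1 x2 x3 x4 x5 :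
  k *: rw x1 x2 x3 x4 x5 = rw (k*x1) (k*x2) (k*x3) (k*x4) (k*x5).
Proof. by apply/rowP => j; rewrite !mxE; case: j => [[|[|[|[|[|]]]]]]. Qed.

Lemma rw_ext x1 x2 x3 x4 x5 y1 y2 y3 y4 y5 :
  x1 = y1 -> x2 = y2 -> x3 = y3 -> x4 = y4 -> x5 = y5 ->
  rw x1 x2 x3 x4 x5 = rw y1 y2 y3 y4 y5.
Proof. by move=> -> -> -> -> ->. Qed.

Lemma la_dim (a b l1 l2 A B C : R) : a != 0 ->
  (l1 + a * A + b * B / 2 != 0) \/ (l2 + a * B / 2 + b * C != 0) ->
  \dim <<[:: rw (- (3 * a ^+ 2)) 0 (3 * a) 0 0;
             rw (- (2 * a * b)) (- a ^+ 2) b (2 * a) 0;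
             rw (- b ^+ 2) (- (2 * a * b)) 0 (2 * b) a;
             rw 0 (- (3 * b ^+ 2)) 0 0 (3 * b);
             rw l1 l2 A B C]>>%VS = 4%N.
Proof.
move=> a0 hL.
set v1 := rw _ _ _ _ _; set v2 := rw _ _ _ _ _; set v3 := rw _ _ _ _ _;
set v4 := rw _ _ _ _ _; set w := rw l1 l2 A B C.
have hfree : free [:: w; v1; v2; v3].
  change (free [tuple w; v1; v2; v3]); apply/freeP => k; rewrite !big_ord_recl big_ord0 /= addr0.
  rewrite /v1 /v2 /v3 /w !rwZ !rwD => /rw_eq0 [E1 E2 E3 E4 E5].
  set k0 := k ord0 in E1 E2 E3 E4 E5 *; set k1 := k (lift ord0 ord0) in E1 E2 E3 E4 E5 *;
  set k2 := k (lift ord0 (lift ord0 ord0)) in E1 E2 E3 E4 E5 *;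
  set k3 := k (lift ord0 (lift ord0 (lift ord0 ord0))) in E1 E2 E3 E4 E5 *.
  have hk0 : k0 = 0.
    case: hL => hL.
      have : k0 * (l1 + a * A + b * B / 2) = 0.
        have -> : k0 * (l1 + a * A + b * B / 2) =
          (k0 * l1 + (k1 * - (3 * a ^+ 2) + (k2 * - (2 * a * b) + k3 * - b ^+ 2)))
          + a * (k0 * A + (k1 * (3 * a) + (k2 * b + k3 * 0)))
          + b / 2 * (k0 * B + (k1 * 0 + (k2 * (2 * a) + k3 * (2 * b)))) by field.
        by rewrite E1 E3 E4; ring.
      by move/eqP; rewrite mulf_eq0 (negbTE hL) orbF => /eqP.
    have : k0 * (l2 + a * B / 2 + b * C) = 0.
      have -> : k0 * (l2 + a * B / 2 + b * C) =
        (k0 * l2 + (k1 * 0 + (k2 * - a ^+ 2 + k3 * - (2 * a * b))))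
        + a / 2 * (k0 * B + (k1 * 0 + (k2 * (2 * a) + k3 * (2 * b))))
        + b * (k0 * C + (k1 * 0 + (k2 * 0 + k3 * a))) by field.
      by rewrite E2 E4 E5; ring.
    by move/eqP; rewrite mulf_eq0 (negbTE hL) orbF => /eqP.
  have hk3 : k3 = 0.
    have : k3 * a = 0 by rewrite -E5 hk0; ring.
    by move/eqP; rewrite mulf_eq0 (negbTE a0) orbF => /eqP.
  have hk2 : k2 = 0.
    have : k2 * (2 * a) = 0 by rewrite -E4 hk0 hk3; ring.
    by move/eqP; rewrite mulf_eq0 mulf_eq0 (negbTE a0) pnatr_eq0 /= orbF => /eqP.
  have hk1 : k1 = 0.
    have : k1 * (3 * a) = 0 by rewrite -E3 hk0 hk2 hk3; ring.
    by move/eqP; rewrite mulf_eq0 mulf_eq0 (negbTE a0) pnatr_eq0 /= orbF => /eqP.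
  move=> [[|[|[|[|//]]]] hi].
  - by rewrite -hk0; congr k; apply: val_inj.
  - by rewrite -hk1; congr k; apply: val_inj.
  - by rewrite -hk2; congr k; apply: val_inj.
  - by rewrite -hk3; congr k; apply: val_inj.
have hv4 : v4 = (b ^+ 3 / a ^+ 3) *: v1 + (- (3 * b ^+ 2 / a ^+ 2)) *: v2
                + (3 * b / a) *: v3.
  rewrite /v1 /v2 /v3 /v4 !rwZ !rwD; apply: rw_ext; field; exact: a0.
have d4 : \dim <<[:: w; v1; v2; v3]>> = 4%N by move/eqP: hfree.
apply/eqP; rewrite eqn_leq; apply/andP; split.
  apply: (@leq_trans (\dim <<[:: w; v1; v2; v3]>>)); last by rewrite d4.
  apply: dimvS; apply/span_subvP => x.
  rewrite !inE => /orP[/eqP->|/orP[/eqP->|/orP[/eqP->|/orP[/eqP->|/eqP->]]]];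
    try by apply: memv_span; rewrite !inE eqxx ?orbT.
  by rewrite hv4; apply: memvD; [apply: memvD|]; apply: memvZ;
    apply: memv_span; rewrite !inE eqxx ?orbT.
apply: (@leq_trans (\dim <<[:: w; v1; v2; v3]>>)); first by rewrite d4.
apply: dimvS; apply: sub_span => x.
rewrite !inE => /orP[/eqP->|/orP[/eqP->|/orP[/eqP->|/eqP->]]];
  by rewrite ?eqxx ?orbT.
Qed.
End LA.
Arguments rw {R}.

Local Open Scope classical_set_scope.
Section Meas.
Variable R : realType.
Local Notation mu := (@lebesgue_measure R).
Local Notation pm := ((mu \x mu)%E).

Lemma line_negl (al be ga : R) : be != 0 ->
  pm.-negligible [set x : R * R | al * x.1 + be * x.2 = ga].
Proof.
move=> be0.
exists [set x : R * R | al * x.1 + be * x.2 = ga]; split => //.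
- have mf : measurable_fun setT (fun x : R * R => al * x.1 + be * x.2).
    apply: (@measurable_realfun.measurable_funD _ _ _ _ (fun x : R * R => al * x.1) (fun x : R * R => be * x.2)).
      exact: (measurable_realfun.measurable_funM (measurable_cst al) measurable_fst).
    exact: (measurable_realfun.measurable_funM (measurable_cst be) measurable_snd).
  by have := mf measurableT [set ga] (measurable_set1 ga); rewrite setTI.
- rewrite /product_measure1 /=; apply: integral0_eq => x _ /=.
  have -> : xsection [set x : R * R | al * x.1 + be * x.2 = ga] x = [set (ga - al * x) / be].
    apply/seteqP; split => y; rewrite /xsection /= inE /=.
      by move=> <-; field.
    by move=> ->; field.
  exact: lebesgue_measure_set1.
Qed.

Lemma vline_negl (c : R) : pm.-negligible [set x : R * R | x.1 = c].
Proof.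
exists ([set c] `*` setT); split => //.
- by apply: measurableX.
- by rewrite product_measure1E //; have /= -> := lebesgue_measure_set1 c; rewrite mul0e.
Qed.
Lemma line_negl2 (al be ga : R) : (al != 0) || (be != 0) ->
  pm.-negligible [set x : R * R | al * x.1 + be * x.2 = ga].
Proof.
have [be0|be0] := eqVneq be 0; last by move=> _; exact: line_negl.
rewrite orbF => al0.
apply: (negligibleS _ (vline_negl (ga / al))) => x /= h.
rewrite -h be0; field.
exact: al0.
Qed.
End Meas.

Section Main.
Variable R : realType.

Lemma tay_gen (a b : R) i k :
  coord12 (pi12 (taylor2 (a, b) (mono2 R i k))) =
  coord12 (pi12 (taylor2 (a, b) (cst2 1 * mono2 R i k))).
Proof. by rewrite /cst2 !polyC1 mul1r. Qed.

Lemma tay30 (a b : R) : coord12 (pi12 (taylor2 (a, b) (mono2 R 3 0))) =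
  rw (- (3 * a ^+ 2)) 0 (3 * a) 0 0.
Proof.
rewrite tay_gen coord_taylor !dr_mono !ds_mono !eval_mono /=.
apply/rowP => j; rewrite !mxE.
by case: j => [[|[|[|[|[|//]]]]] hj] /=; field.
Qed.

Lemma tay21 (a b : R) : coord12 (pi12 (taylor2 (a, b) (mono2 R 2 1))) =
  rw (- (2 * a * b)) (- a ^+ 2) b (2 * a) 0.
Proof.
rewrite tay_gen coord_taylor !dr_mono !ds_mono !eval_mono /=.
apply/rowP => j; rewrite !mxE.
by case: j => [[|[|[|[|[|//]]]]] hj] /=; field.
Qed.

Lemma tay12 (a b : R) : coord12 (pi12 (taylor2 (a, b) (mono2 R 1 2))) =
  rw (- b ^+ 2) (- (2 * a * b)) 0 (2 * b) a.
Proof.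
rewrite tay_gen coord_taylor !dr_mono !ds_mono !eval_mono /=.
apply/rowP => j; rewrite !mxE.
by case: j => [[|[|[|[|[|//]]]]] hj] /=; field.
Qed.

Lemma tay03 (a b : R) : coord12 (pi12 (taylor2 (a, b) (mono2 R 0 3))) =
  rw 0 (- (3 * b ^+ 2)) 0 0 (3 * b).
Proof.
rewrite tay_gen coord_taylor !dr_mono !ds_mono !eval_mono /=.
apply/rowP => j; rewrite !mxE.
by case: j => [[|[|[|[|[|//]]]]] hj] /=; field.
Qed.

Lemma coords_nz (f : bipoly R) : in_S12 f -> f != 0 ->
  ~ [/\ coef2 f 1 0 = 0, coef2 f 0 1 = 0, coef2 f 2 0 = 0, coef2 f 1 1 = 0
      & coef2 f 0 2 = 0].
Proof.
move=> [p1 [p2 [h1 h2 Ef]]] fn0 [e1 e2 e3 e4 e5].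
have H : forall i k, coef2 f i k = 0.
  move=> i k.
  case: i => [|[|[|i]]]; case: k => [|[|[|k]]] => //;
  rewrite Ef coef2D h1 ?h2 ?addr0 //; lia.
move/eqP: fn0; apply; apply/polyP => k; apply/polyP => i.
by rewrite !coef0; exact: H.
Qed.

Lemma dim4 (f : bipoly R) (xi : R * R) :
  xi.1 != 0 ->
  (coef2 f 1 0 + xi.1 * coef2 f 2 0 + xi.2 * coef2 f 1 1 / 2 != 0) \/
  (coef2 f 0 1 + xi.1 * coef2 f 1 1 / 2 + xi.2 * coef2 f 0 2 != 0) ->
  \dim (imgS3_plus xi f) = 4%N.
Proof.
case: xi => a b /= a0 hL.
have := @la_dim R _ _ _ _ _ _ _ a0 hL.
rewrite -(tay30 a b) -(tay21 a b) -(tay12 a b) -(tay03 a b).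
by [].
Qed.
End Main.

Theorem lemma7p3 (R : realType) (f : bipoly R) :
  in_S12 f -> f != 0 ->
  {ae ((@lebesgue_measure R) \x (@lebesgue_measure R))%E,
     forall xi : R * R, \dim (imgS3_plus xi f) = 4%N}.
Proof.
move=> hf fn0.
set l1 := coef2 f 1 0; set l2 := coef2 f 0 1; set A := coef2 f 2 0;
set B := coef2 f 1 1; set C := coef2 f 0 2.
have nz := @coords_nz R f hf fn0.
set L1 := [set x : R * R | l1 + x.1 * A + x.2 * B / 2 = 0].
set L2 := [set x : R * R | l2 + x.1 * B / 2 + x.2 * C = 0].
have hV := @vline_negl R 0.
have hL : ((@lebesgue_measure R) \x (@lebesgue_measure R))%E.-negligible (L1 `&` L2).
  case: (boolP ((A != 0) || (B != 0))) => hAB.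
    apply: (negligibleS _ (@line_negl2 R A (B / 2) (- l1) _)).
      move=> x [/= h1 _].
      have -> : A * x.1 + B / 2 * x.2 = - l1 + (l1 + x.1 * A + x.2 * B / 2) by ring.
      by rewrite h1 addr0.
    case/orP: hAB => [->//|hB]; apply/orP; right.
    by rewrite mulf_eq0 negb_or hB invr_eq0 pnatr_eq0.
  move: hAB; rewrite negb_or !negbK => /andP[/eqP A0 /eqP B0].
  case: (boolP (C != 0)) => hC.
    apply: (negligibleS _ (@line_negl R (B / 2) C (- l2) hC)).
    move=> x [_ /= h2].
    have -> : B / 2 * x.1 + C * x.2 = - l2 + (l2 + x.1 * B / 2 + x.2 * C) by ring.
    by rewrite h2 addr0.
  move/negPn/eqP: hC => C0.
  apply: (negligibleS _ (@negligible_set0 _ _ _ _)) => x [/= h1 h2].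
  have e1 : l1 = 0 by move: h1; rewrite /L1 /= A0 B0; lra.
  have e2 : l2 = 0 by move: h2; rewrite /L2 /= B0 C0; lra.
  exfalso; apply: nz; split; [exact: e1 | exact: e2 | exact: A0 | exact: B0 | exact: C0].
have key : forall x : R * R, x.1 != 0 -> ~ L1 x \/ ~ L2 x ->
    \dim (imgS3_plus x f) = 4%N.
  move=> x x0 [h|h]; apply: dim4 => //; [left|right]; apply/eqP; exact: h.
apply: (negligibleS _ (negligibleU hV hL)).
move=> x /= hx; case: (eqVneq x.1 0) => [x0|x0]; [by left|right].
split.
  by have [//|h1] := pselect (L1 x); exfalso; apply: hx; apply: key => //; left.
by have [//|h1] := pselect (L2 x); exfalso; apply: hx; apply: key => //; right.
Qed.
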